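(* Let $U$ be a finite set, $(T,I,N)$ an IMTL triplet, $\widetilde{R}$ a $T$-preorder relation on $U$, and $A\subseteq U$ a crisp set (identified with its indicator fuzzy set), $coA=U\setminus A$. Let $L:\mathbb{R}\times\mathbb{R}\to\mathbb{R}^+$ be a loss function that is of $\lor$-type, $N$-duality preserving and symmetric. Consider problem (P1): $$\text{minimize }\sum_{u\in U}L(A(u),\hat{A}(u))\ \text{ s.t. } T(\widetilde{R}(u,v),\hat{A}(v))\le\hat{A}(u)\ (u,v\in U),\ 0\le\hat{A}(u)\le1,$$ and problem (P2) in variables $(\beta_u)_{u\in U}$: $$\text{minimize }\sum_{u\in U}L(1,\beta_u)\ \text{ s.t. } T(\beta_u,\beta_v)\le N(\widetilde{R}(v,u))\ (u\in A,\ v\in coA),\ 0\le\beta_u\le1\ (u\in U).$$ Under the correspondence $\beta_u=\hat{A}(u)$ for $u\in A$ and $\beta_u=N(\hat{A}(u))$ for $u\in coA$, problems (P1) and (P2) are equivalent: they have the same optimal value, and $\hat{A}$ is an optimal solution of (P1) if and only if the corresponding $\beta$ is an optimal solution of (P2).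
   Context: A residual triplet $(T,I,N)$ consists of a left-continuous $t$-norm $T$, its residual implicator $I(x,y)=\sup\{\beta\in[0,1]: T(x,\beta)\le y\}$ and $N(x)=I(x,0)$; it is IMTL if $N$ is involutive. $\widetilde{R}:U\times U\to[0,1]$ is a $T$-preorder if reflexive and $T$-transitive. A loss function $L$ is of $\lor$-type if for every real $a$: $L(a,a)=0$; $x\mapsto L(x,a)$ and $x\mapsto L(a,x)$ are increasing for $x>a$ and decreasing for $x<a$. $L$ is symmetric if $L(y,\hat y)=L(\hat y,y)$, and $N$-duality preserving if $L(y,\hat y)=L(N(\hat y),N(y))$ for all $y,\hat y\in[0,1]$. *)

(* Defs.v *)
From HB Require Import structures.
From mathcomp Require Import all_boot all_order all_algebra.
From mathcomp Require Import classical_sets reals.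
Set Implicit Arguments. Unset Strict Implicit. Unset Printing Implicit Defensive.
Import Order.TTheory GRing.Theory Num.Theory.
Local Open Scope ring_scope.
Local Open Scope classical_set_scope.

Section Fuzzy.
Variable R : realType.

Definition in01 (x : R) : Prop := 0 <= x <= 1.

(* t-norm on [0,1] (values outside [0,1] are irrelevant) *)
Definition is_tnorm (T : R -> R -> R) : Prop :=
  [/\ (forall x y, in01 x -> in01 y -> in01 (T x y)),
      (forall x y, in01 x -> in01 y -> T x y = T y x),
      (forall x y z, in01 x -> in01 y -> in01 z -> T x (T y z) = T (T x y) z),
      (forall x x' y y', in01 x -> in01 x' -> in01 y -> in01 y' ->
          x <= x' -> y <= y' -> T x y <= T x' y') &
      (forall x, in01 x -> T x 1 = x)].

(* left-continuity (in the first argument; by commutativity in both) *)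
Definition left_continuous (T : R -> R -> R) : Prop :=
  forall y x, in01 y -> 0 < x <= 1 ->
  forall e, 0 < e -> exists2 d, 0 < d &
    forall z, 0 <= z -> x - d < z -> z <= x -> `|T z y - T x y| < e.

Definition resid (T : R -> R -> R) (x y : R) : R :=
  sup [set b | in01 b /\ T x b <= y].

Definition negation (T : R -> R -> R) (x : R) : R := resid T x 0.

Definition IMTL (T : R -> R -> R) : Prop :=
  [/\ is_tnorm T, left_continuous T &
      forall x, in01 x -> negation T (negation T x) = x].

Definition T_preorder (U : Type) (T : R -> R -> R) (Rr : U -> U -> R) : Prop :=
  [/\ (forall u v, in01 (Rr u v)),
      (forall u, Rr u u = 1) &
      (forall u v w, T (Rr u v) (Rr v w) <= Rr u w)].

Definition vee_type (L : R -> R -> R) : Prop :=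
  forall a, [/\ L a a = 0,
    (forall x y, a < x -> x < y -> L x a < L y a),
    (forall x y, x < y -> y < a -> L y a < L x a),
    (forall x y, a < x -> x < y -> L a x < L a y) &
    (forall x y, x < y -> y < a -> L a y < L a x)].

Definition symmetric_loss (L : R -> R -> R) : Prop :=
  forall y yh, L y yh = L yh y.

Definition N_duality_preserving (T : R -> R -> R) (L : R -> R -> R) : Prop :=
  forall y yh, in01 y -> in01 yh ->
    L y yh = L (negation T yh) (negation T y).

Variable U : finType.

Definition indic (A : {set U}) (u : U) : R := if u \in A then 1 else 0.

Definition feas1 (T : R -> R -> R) (Rr : U -> U -> R) (Ah : U -> R) : Prop :=
  (forall u v, T (Rr u v) (Ah v) <= Ah u) /\ (forall u, in01 (Ah u)).
Definition obj1 (L : R -> R -> R) (A : {set U}) (Ah : U -> R) : R :=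
  \sum_(u : U) L (indic A u) (Ah u).
Definition optimal1 T Rr L A (Ah : U -> R) : Prop :=
  feas1 T Rr Ah /\ forall Ah', feas1 T Rr Ah' -> obj1 L A Ah <= obj1 L A Ah'.
Definition value1 T Rr L A : R :=
  inf [set r | exists Ah, feas1 T Rr Ah /\ r = obj1 L A Ah].

Definition feas2 (T : R -> R -> R) (Rr : U -> U -> R) (A : {set U})
    (b : U -> R) : Prop :=
  (forall u v, u \in A -> v \notin A -> T (b u) (b v) <= negation T (Rr v u))
  /\ (forall u, in01 (b u)).
Definition obj2 (L : R -> R -> R) (b : U -> R) : R :=
  \sum_(u : U) L 1 (b u).
Definition optimal2 T Rr L A (b : U -> R) : Prop :=
  feas2 T Rr A b /\ forall b', feas2 T Rr A b' -> obj2 L b <= obj2 L b'.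
Definition value2 T Rr L A : R :=
  inf [set r | exists b, feas2 T Rr A b /\ r = obj2 L b].

Definition corr (T : R -> R -> R) (A : {set U}) (Ah : U -> R) : U -> R :=
  fun u => if u \in A then Ah u else negation T (Ah u).

End Fuzzy.

(* Main.v *)
Require Import Defs.
From HB Require Import structures.
From mathcomp Require Import all_boot all_order all_algebra.
From mathcomp Require Import classical_sets reals boolp.
From mathcomp Require Import lra.
Import Order.TTheory GRing.Theory Num.Theory.
Local Open Scope ring_scope.
Set Implicit Arguments. Unset Strict Implicit.

Lemma in01_0 (R : realType) : in01 (0 : R). Proof. by rewrite /in01 lexx ler01. Qed.
Lemma in01_1 (R : realType) : in01 (1 : R). Proof. by rewrite /in01 lexx ler01. Qed.

Lemma T0r (R : realType) (T : R -> R -> R) x : is_tnorm T -> in01 x -> T x 0 = 0.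
Proof.
case=> Tin Tc Ta Tm T1 hx.
have h1 : T x 0 <= T 1 0 := Tm _ _ _ _ hx (in01_1 R) (in01_0 R) (in01_0 R) (proj2 (andP hx)) (lexx 0).
rewrite (Tc _ _ (in01_1 R) (in01_0 R)) (T1 _ (in01_0 R)) in h1.
have /andP[h2 _] := Tin _ _ hx (in01_0 R).
by apply/le_anti; rewrite h1 h2.
Qed.

Lemma T1l (R : realType) (T : R -> R -> R) x : is_tnorm T -> in01 x -> T 1 x = x.
Proof. by case=> Tin Tc Ta Tm T1 hx; rewrite Tc ?T1 //; exact: in01_1. Qed.

Lemma N_in01 (R : realType) (T : R -> R -> R) x : is_tnorm T -> in01 x ->
  in01 (negation T x).
Proof.
move=> HT hx; rewrite /negation /resid.
set S := (X in sup X).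
have S0 : S 0 by split; [exact: in01_0| rewrite T0r].
have ub1 : ubound S 1 by move=> b [/andP[_ ->]].
apply/andP; split.
  by apply: ub_le_sup => //; exists 1.
by apply: ge_sup => //; exists 0.
Qed.

Lemma N0 (R : realType) (T : R -> R -> R) : is_tnorm T -> negation T 0 = 1.
Proof.
move=> HT; have := N_in01 HT (in01_0 R) => /andP[_ h].
apply/le_anti; rewrite h /=.
rewrite /negation /resid; apply: ub_le_sup.
  by exists 1 => b [/andP[_ ->]].
split; first exact: in01_1.
case: HT => _ _ _ _ T1; rewrite T1 //; exact: in01_0.
Qed.

Lemma resid0 (R : realType) (T : R -> R -> R) x y :
  is_tnorm T -> left_continuous T -> in01 x -> in01 y ->
  (T x y <= 0) <-> (y <= negation T x).
Proof.
move=> HT Hlc hx hy; have HT' := HT; case: HT' => Tin Tc Ta Tm T1.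
rewrite /negation /resid; set S := (X in sup X).
have S0 : S 0 by split; [exact: in01_0| rewrite T0r].
have ub1 : ubound S 1 by move=> b [/andP[_ ->]].
have hsS : has_sup S by split; [exists 0|exists 1].
split=> [h|h].
  by apply: ub_le_sup; [exists 1|split].
have [y0|ypos] := eqVneq y 0; first by rewrite y0 T0r.
have ygt0 : 0 < y by rewrite lt_neqAle eq_sym ypos; case/andP: hy.
rewrite Tc //; rewrite leNgt; apply/negP => hpos.
have hy' : 0 < y <= 1 by rewrite ygt0; case/andP: hy.
have [d d0 hd] := Hlc x y hx hy' _ hpos.
have [z [hz hTz] hzs] := sup_adherent d0 hsS.
have [yz|zy] := leP y z.
  have h1 : T x y <= T x z := Tm _ _ _ _ hx hx hy hz (lexx x) yz.
  have : T y x <= 0 by rewrite Tc //; apply: le_trans h1 hTz.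
  by rewrite leNgt hpos.
have yd : y - d < z by apply: le_lt_trans hzs; rewrite lerD2r.
have := hd z (proj1 (andP hz)) yd (ltW zy).
rewrite ltr_norml => /andP[h3 h4].
have : T z x <= 0 by rewrite Tc.
move=> h5; lra.
Qed.

Lemma cross_equiv (R : realType) (T : R -> R -> R) a c r : IMTL T ->
  in01 a -> in01 c -> in01 r ->
  (T a (negation T c) <= negation T r) <-> (T r a <= c).
Proof.
move=> [HT Hlc Hinv] ha hc hr; have HT' := HT; case: HT' => Tin Tc Ta Tm T1.
have hNc := N_in01 HT hc.
have hTa := Tin _ _ ha hNc.
have hTr := Tin _ _ hr ha.
rewrite -(resid0 HT Hlc hr hTa) Ta // -(Tc _ _ hNc hTr).
by rewrite (resid0 HT Hlc hNc hTr) Hinv.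
Qed.

Lemma L_up (R : realType) (L : R -> R -> R) a x y :
  (forall a b, 0 <= L a b) -> vee_type L -> a <= x -> x < y -> L a x < L a y.
Proof.
move=> L0 HL ax xy; have [La _ _ h4 _] := HL a.
have [ex|ax'] := eqVneq a x.
  rewrite -ex La; have ay : a < y by rewrite ex.
  have m1 : a < (a + y) / 2 by lra.
  have m2 : (a + y) / 2 < y by lra.
  exact: le_lt_trans (L0 _ _) (h4 _ _ m1 m2).
by apply: h4 => //; rewrite lt_neqAle ax' ax.
Qed.

Lemma L_down (R : realType) (L : R -> R -> R) a x y :
  (forall a b, 0 <= L a b) -> vee_type L -> x <= a -> y < x -> L a x < L a y.
Proof.
move=> L0 HL ax xy; have [La _ _ _ h5] := HL a.
have [ex|ax'] := eqVneq x a.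
  rewrite ex La; have ay : y < a by rewrite -ex.
  have m1 : y < (a + y) / 2 by lra.
  have m2 : (a + y) / 2 < a by lra.
  exact: le_lt_trans (L0 _ _) (h5 _ _ m1 m2).
by apply: h5 => //; rewrite lt_neqAle ax' ax.
Qed.

Definition cross (R : realType) (U : finType) (T : R -> R -> R) (Rr : U -> U -> R)
  (A : {set U}) (Ah : U -> R) :=
  forall v u, v \notin A -> u \in A -> T (Rr v u) (Ah u) <= Ah v.

Definition clo (R : realType) (U : finType) (T : R -> R -> R) (Rr : U -> U -> R)
  (A : {set U}) (Ah : U -> R) (w : U) : R :=
  \big[Order.max/0]_(x in A) T (Rr w x) (Ah x).

Lemma clo_in01 (R : realType) (U : finType) (T : R -> R -> R) (Rr : U -> U -> R)
  (A : {set U}) (Ah : U -> R) w :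
  is_tnorm T -> T_preorder T Rr -> (forall u, in01 (Ah u)) -> in01 (clo T Rr A Ah w).
Proof.
move=> [Tin _ _ _ _] [Rin _ _] hA; rewrite /clo.
apply: (big_ind (fun m => in01 m)); first exact: in01_0.
  move=> m1 m2 /andP[a1 b1] /andP[a2 b2]; apply/andP; split.
    by rewrite le_max a1.
  by rewrite ge_max b1 b2.
by move=> i _; apply: Tin.
Qed.

Lemma clo_feas (R : realType) (U : finType) (T : R -> R -> R) (Rr : U -> U -> R)
  (A : {set U}) (Ah : U -> R) :
  is_tnorm T -> T_preorder T Rr -> (forall u, in01 (Ah u)) -> feas1 T Rr (clo T Rr A Ah).
Proof.
move=> HT HR hA; split; last by move=> u; exact: clo_in01.
have HT' := HT; case: HT' => Tin Tc Ta Tm T1.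
have HR' := HR; case: HR' => Rin Rref Rtr.
move=> u v.
case: (pickP (mem A)) => [j jA|A0].
  have F0 : forall i, i \in A -> 0 <= T (Rr v i) (Ah i).
    by move=> i _; case/andP: (Tin _ _ (Rin v i) (hA i)).
  rewrite /clo; have [x0 x0A ->] := @eq_bigmax _ _ _ 0 j (mem A) _ jA F0.
  rewrite Ta //; apply: bigmax_sup x0A _.
  apply: Tm => //; try apply: Tin => //.
have -> : clo T Rr A Ah v = 0 by rewrite /clo big_pred0.
rewrite T0r //; have /andP[] := clo_in01 A u HT HR hA => //.
Qed.

Lemma clo_geA (R : realType) (U : finType) (T : R -> R -> R) (Rr : U -> U -> R)
  (A : {set U}) (Ah : U -> R) w :
  is_tnorm T -> T_preorder T Rr -> (forall u, in01 (Ah u)) -> w \in A ->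
  Ah w <= clo T Rr A Ah w.
Proof.
move=> HT [_ Rref _] hA wA; rewrite /clo; apply: (@bigmax_sup _ _ _ 0 w (mem A)) => //.
by rewrite Rref T1l.
Qed.

Lemma clo_leNA (R : realType) (U : finType) (T : R -> R -> R) (Rr : U -> U -> R)
  (A : {set U}) (Ah : U -> R) w :
  (forall u, in01 (Ah u)) -> cross T Rr A Ah -> w \notin A ->
  clo T Rr A Ah w <= Ah w.
Proof.
move=> hA hc wA; rewrite /clo; apply: bigmax_le.
  by case/andP: (hA w).
by move=> i iA; apply: hc.
Qed.

Lemma feas1_cross (R : realType) (U : finType) (T : R -> R -> R) (Rr : U -> U -> R)
  (A : {set U}) (Ah : U -> R) : feas1 T Rr Ah -> cross T Rr A Ah.
Proof. by move=> [h _] v u _ _; apply: h. Qed.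

Lemma corr_in01 (R : realType) (U : finType) (T : R -> R -> R)
  (A : {set U}) (Ah : U -> R) : is_tnorm T -> (forall u, in01 (Ah u)) ->
  forall u, in01 (corr T A Ah u).
Proof. by move=> HT hA u; rewrite /corr; case: ifP => _ //; apply: N_in01. Qed.

Lemma corrK (R : realType) (U : finType) (T : R -> R -> R)
  (A : {set U}) (Ah : U -> R) : IMTL T -> (forall u, in01 (Ah u)) ->
  corr T A (corr T A Ah) = Ah.
Proof.
move=> [_ _ Hinv] hA; apply: funext => u; rewrite /corr.
by case: (u \in A) => //; rewrite Hinv.
Qed.

Lemma feas2_corr (R : realType) (U : finType) (T : R -> R -> R) (Rr : U -> U -> R)
  (A : {set U}) (Ah : U -> R) : IMTL T -> T_preorder T Rr -> (forall u, in01 (Ah u)) ->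
  feas2 T Rr A (corr T A Ah) <-> cross T Rr A Ah.
Proof.
move=> HI [Rin _ _] hA; have HT := HI; case: HT => HT _ _.
split.
  move=> [h _] v u vA uA; have := h u v uA vA.
  by rewrite /corr uA (negbTE vA) (cross_equiv HI).
move=> hc; split; last exact: corr_in01.
move=> u v uA vA; rewrite /corr uA (negbTE vA) (cross_equiv HI) //.
exact: hc.
Qed.

Lemma obj_corr (R : realType) (U : finType) (T : R -> R -> R)
  (A : {set U}) (L : R -> R -> R) (Ah : U -> R) : is_tnorm T ->
  N_duality_preserving T L -> symmetric_loss L -> (forall u, in01 (Ah u)) ->
  obj1 L A Ah = obj2 L (corr T A Ah).
Proof.
move=> HT Hd Hs hA; apply: eq_bigr => u _; rewrite /indic /corr.
case: ifP => _ //.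
by rewrite Hd ?N0 // ?Hs //; exact: in01_0.
Qed.

Lemma clo_term (R : realType) (U : finType) (T : R -> R -> R) (Rr : U -> U -> R)
  (A : {set U}) (L : R -> R -> R) (Ah : U -> R) u :
  is_tnorm T -> T_preorder T Rr -> (forall a b, 0 <= L a b) -> vee_type L ->
  (forall u, in01 (Ah u)) -> cross T Rr A Ah ->
  L (indic R A u) (clo T Rr A Ah u) <= L (indic R A u) (Ah u) /\
  (clo T Rr A Ah u != Ah u -> L (indic R A u) (clo T Rr A Ah u) < L (indic R A u) (Ah u)).
Proof.
move=> HT HR L0 HL hA hc.
have /andP[c0 c1] := clo_in01 A u HT HR hA.
rewrite /indic; case: ifP => uA.
  have h := clo_geA HT HR hA uA.
  have st : clo T Rr A Ah u != Ah u -> L 1 (clo T Rr A Ah u) < L 1 (Ah u).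
    by move=> ne; apply: L_down => //; rewrite lt_neqAle eq_sym ne h.
  split=> //; have [e|ne] := eqVneq (clo T Rr A Ah u) (Ah u).
    by rewrite e.
  exact/ltW/st.
have h := clo_leNA hA hc (negbT uA).
have st : clo T Rr A Ah u != Ah u -> L 0 (clo T Rr A Ah u) < L 0 (Ah u).
  by move=> ne; apply: L_up => //; rewrite lt_neqAle ne h.
split=> //; have [e|ne] := eqVneq (clo T Rr A Ah u) (Ah u).
  by rewrite e.
exact/ltW/st.
Qed.

Lemma clo_obj_le (R : realType) (U : finType) (T : R -> R -> R) (Rr : U -> U -> R)
  (A : {set U}) (L : R -> R -> R) (Ah : U -> R) :
  is_tnorm T -> T_preorder T Rr -> (forall a b, 0 <= L a b) -> vee_type L ->
  (forall u, in01 (Ah u)) -> cross T Rr A Ah ->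
  obj1 L A (clo T Rr A Ah) <= obj1 L A Ah.
Proof.
move=> HT HR L0 HL hA hc; apply: ler_sum => u _.
by case: (clo_term u HT HR L0 HL hA hc).
Qed.

Lemma clo_obj_eq (R : realType) (U : finType) (T : R -> R -> R) (Rr : U -> U -> R)
  (A : {set U}) (L : R -> R -> R) (Ah : U -> R) :
  is_tnorm T -> T_preorder T Rr -> (forall a b, 0 <= L a b) -> vee_type L ->
  (forall u, in01 (Ah u)) -> cross T Rr A Ah ->
  obj1 L A Ah <= obj1 L A (clo T Rr A Ah) -> feas1 T Rr Ah.
Proof.
move=> HT HR L0 HL hA hc hle.
have hge := clo_obj_le HT HR L0 HL hA hc.
have eq0 : \sum_(u : U) (L (indic R A u) (Ah u) - L (indic R A u) (clo T Rr A Ah u)) = 0.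
  rewrite /obj1 in hle hge.
  by rewrite sumrB; apply/eqP; rewrite subr_eq0 eq_le hle hge.
have ext : forall u, clo T Rr A Ah u = Ah u.
  move=> u; apply/eqP; apply/negP => ne.
  have [_ st] := clo_term u HT HR L0 HL hA hc.
  have F0 : forall i : U, true -> 0 <= L (indic R A i) (Ah i) - L (indic R A i) (clo T Rr A Ah i).
    by move=> i _; rewrite subr_ge0; case: (clo_term i HT HR L0 HL hA hc).
  have := psumr_eq0P F0 eq0 (i := u) isT.
  move=> /eqP; rewrite subr_eq0 => /eqP e.
  by move: (st (introN idP ne)); rewrite e ltxx.
have [h1 h2] := clo_feas A HT HR hA.
by split=> // u v; rewrite -!ext.
Qed.

Theorem proposition8 (R : realType) (U : finType) (T : R -> R -> R)
    (Rr : U -> U -> R) (A : {set U}) (L : R -> R -> R) :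
  IMTL T -> T_preorder T Rr ->
  (forall a b, 0 <= L a b) -> vee_type L ->
  N_duality_preserving T L -> symmetric_loss L ->
  value1 T Rr L A = value2 T Rr L A /\
  (forall Ah : U -> R, (forall u, in01 (Ah u)) ->
     (optimal1 T Rr L A Ah <-> optimal2 T Rr L A (corr T A Ah))).
Proof.
move=> HI HR L0 HL Hd Hs.
have HT : is_tnorm T by case: HI.
have key : forall b, feas2 T Rr A b ->
    feas1 T Rr (clo T Rr A (corr T A b)) /\
    obj1 L A (clo T Rr A (corr T A b)) <= obj2 L b.
  move=> b hb; have hb01 := hb.2.
  have hA : forall u, in01 (corr T A b u) := corr_in01 A HT hb01.
  have hc : cross T Rr A (corr T A b).
    by rewrite -(feas2_corr A HI HR hA) corrK.
  split; first exact: clo_feas.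
  apply: le_trans (clo_obj_le HT HR L0 HL hA hc) _.
  by rewrite (obj_corr A HT Hd Hs hA) corrK.
have f1f2 : forall Ah, feas1 T Rr Ah ->
    feas2 T Rr A (corr T A Ah) /\ obj2 L (corr T A Ah) = obj1 L A Ah.
  move=> Ah h; split; first by apply/(feas2_corr A HI HR h.2)/feas1_cross.
  by rewrite (obj_corr A HT Hd Hs h.2).
have feas_one : feas1 T Rr (fun _ : U => 1).
  have [Tin Tc Ta Tm T1] := HT; have [Rin _ _] := HR.
  split=> [u v|u]; last exact: in01_1.
  by rewrite T1 //; case/andP: (Rin u v).
split.
  rewrite /value1 /value2.
  set S1 := (X in inf X = _); set S2 := (X in _ = inf X).
  have hl1 : has_lbound S1.
    by exists 0 => r [Ah [_ ->]]; apply: sumr_ge0.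
  have hl2 : has_lbound S2.
    by exists 0 => r [b [_ ->]]; apply: sumr_ge0.
  have ne1 : nonempty S1 by exists (obj1 L A (fun _ => 1)), (fun _ => 1).
  have ne2 : nonempty S2.
    have [g1 g2] := f1f2 _ feas_one.
    by exists (obj2 L (corr T A (fun _ => 1))), (corr T A (fun _ => 1)).
  apply/le_anti/andP; split.
    apply: lb_le_inf => // r [b [hb ->]].
    have [k1 k2] := key b hb; apply: le_trans k2.
    by apply: ge_inf => //; exists (clo T Rr A (corr T A b)).
  apply: lb_le_inf => // r [Ah [h ->]].
  have [g1 g2] := f1f2 Ah h; rewrite -g2.
  by apply: ge_inf => //; exists (corr T A Ah).
move=> Ah hA; split.
  move=> [h1 hopt]; have [f2 e] := f1f2 Ah h1; split=> // b hb.
  have [k1 k2] := key b hb; rewrite e; exact: le_trans (hopt _ k1) k2.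
move=> [h2 hopt]; have hc := (feas2_corr A HI HR hA).1 h2.
have hf1 : feas1 T Rr Ah.
  apply: (clo_obj_eq HT HR L0 HL hA hc).
  have [g1 g2] := f1f2 _ (clo_feas A HT HR hA).
  by rewrite (obj_corr A HT Hd Hs hA) -g2; exact: hopt _ g1.
split=> // Ah' h'; have [g1 g2] := f1f2 Ah' h'.
by rewrite (obj_corr A HT Hd Hs hA) -g2; exact: hopt _ g1.
Qed.
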